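(* Assume (MA1), (MA2), (MA3) and (MA4) hold, and let the sequences be generated by Algorithm R2N. If the algorithm generates only finitely many successful iterations, then there is $x^*\in\mathbb{R}^n$ such that $x_k=x^*$ for all sufficiently large $k$, and \[ \liminf_{k\to\infty}\nu_k^{-1/2}\xi_{cp}(x_k,\nu_k^{-1})^{1/2}=0 . \]
   Context: Setting: $f:\mathbb{R}^n\to\mathbb{R}$ continuously differentiable, $h:\mathbb{R}^n\to\mathbb{R}\cup\{+\infty\}$ proper lower semicontinuous; $\partial$ = limiting subdifferential; $\|\cdot\|$ Euclidean norm on vectors, spectral norm on matrices. A function $g$ is prox-bounded if there exist $\nu>0$, $x$ with $\inf_y g(y)+\frac1{2\nu}\|y-x\|^2>-\infty$; its threshold is the supremum of such $\nu$. For each $x$, $B(x)$ is symmetric and $\psi(\cdot;x):\mathbb{R}^n\to\mathbb{R}\cup\{+\infty\}$. $\varphi(s;x)=f(x)+\nabla f(x)^Ts+\tfrac12s^TB(x)s$, $m(s;x,\sigma)=\varphi(s;x)+\tfrac12\sigma\|s\|^2+\psi(s;x)$; $\varphi_{cp}(s;x)=f(x)+\nabla f(x)^Ts$, $m_{cp}(s;x,\nu^{-1})=\varphi_{cp}(s;x)+\tfrac12\nu^{-1}\|s\|^2+\psi(s;x)$, $P_{cp}(x,\nu^{-1})=\operatorname{argmin}_s m_{cp}(s;x,\nu^{-1})$, and for $s_{cp}\in P_{cp}(x,\nu^{-1})$, $\xi_{cp}(x,\nu^{-1})=f(x)+h(x)-(\varphi_{cp}(s_{cp};x)+\psi(s_{cp};x))$.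 (MA1): for every $x$, $\psi(\cdot;x)$ is proper, lsc, prox-bounded with threshold $\lambda_x$, $\psi(0;x)=h(x)$, $\partial\psi(0;x)=\partial h(x)$. (MA2): there is $\lambda\in(0,+\infty]$ with $\lambda_x\ge\lambda$ for all $x$ (convention $1/\infty=0$). (MA3): there is a function $\omega:[0,\infty)\to[0,\infty)$ with $\omega(t)/t\to0$ as $t\downarrow0$ such that $|h(x_k+s_k)-\psi(s_k;x_k)|\le\omega(\|s_k\|)$ for all $k$. (MA4): $\sum_{k\in\mathbb N}1/r_k=+\infty$, where $r_k:=\max_{0\le j\le k}\|B_j\|+1$. Algorithm R2N: constants $0<\theta_1<1<\theta_2$, $0<\eta_1\le\eta_2<1$, $0<\gamma_3\le1<\gamma_1\le\gamma_2$; $x_0$ with $h(x_0)<\infty$, $\sigma_0>0$. For $k=0,1,\dots$: choose symmetric $B_k=B(x_k)$; set $\nu_k=\theta_1/(\|B_k\|+\sigma_k)$; compute $s_{k,cp}\in P_{cp}(x_k,\nu_k^{-1})$ and $\xi_{cp}(x_k,\nu_k^{-1})$ (using $s_{k,cp}$); compute $s_k$ with $m(s_k;x_k,\sigma_k)\le m(s_{k,cp};x_k,\sigma_k)$; if $\|s_k\|>\theta_2\|s_{k,cp}\|$, reset $s_k=s_{k,cp}$; compute $\rho_k=\frac{(f+h)(x_k)-(f+h)(x_k+s_k)}{\varphi(0;x_k)+\psi(0;x_k)-\varphi(s_k;x_k)-\psi(s_k;x_k)}$ (extended arithmetic: $\pm\infty\cdot0=0$, $(\pm\infty)/(\pm\infty)=0$);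 if $\rho_k\ge\eta_1$ set $x_{k+1}=x_k+s_k$, else $x_{k+1}=x_k$; choose $\sigma_{k+1}\in[\gamma_3\sigma_k,\sigma_k]$ if $\rho_k\ge\eta_2$ (very successful), $\sigma_{k+1}\in[\sigma_k,\gamma_1\sigma_k]$ if $\eta_1\le\rho_k<\eta_2$, $\sigma_{k+1}\in[\gamma_1\sigma_k,\gamma_2\sigma_k]$ if $\rho_k<\eta_1$ (unsuccessful). $\mathcal S=\{k:\rho_k\ge\eta_1\}$ (successful iterations), $\mathcal S_k=\{i\in\mathcal S:i\le k\}$, $\mathcal U=\mathbb N\setminus\mathcal S$, $\mathcal U_k=\{i\in\mathcal U:i\le k\}$. *)

(* Defs.v *)
From HB Require Import structures.
From mathcomp Require Import all_boot all_order all_algebra.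
From mathcomp Require Import all_classical all_reals all_analysis.
Set Implicit Arguments. Unset Strict Implicit. Unset Printing Implicit Defensive.
Import Order.TTheory GRing.Theory Num.Theory.
Import numFieldNormedType.Exports.
Local Open Scope classical_set_scope.
Local Open Scope ring_scope.

Section Defs.
Variables (R : realType) (n : nat).
Local Notation vec := 'cV[R]_n.
Local Notation mat := 'M[R]_n.

Definition dotp (u v : vec) : R := \sum_i u i 0 * v i 0.
Definition enorm (v : vec) : R := Num.sqrt (dotp v v).

Definition snorm (B : mat) : R :=
  sup [set enorm (B *m v) | v in [set v : vec | enorm v <= 1]].

Definition grad (f : vec -> R) (x : vec) : vec :=
  \col_i ('d f x (delta_mx i 0 : vec)).

Definition cont_diff (f : vec -> R) : Prop :=
  (forall x, differentiable f x) /\ continuous (grad f).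

Definition eproper (g : vec -> \bar R) : Prop :=
  (forall y, g y != -oo%E) /\ (exists y, g y != +oo%E).

Definition elsc (g : vec -> \bar R) : Prop :=
  forall y (a : R), (a%:E < g y)%E -> \forall z \near y, (a%:E < g z)%E.

Definition prox_bounded_at (g : vec -> \bar R) (nu : R) : Prop :=
  0 < nu /\ exists x : vec,
    (-oo < ereal_inf [set (g y + ((2 * nu)^-1 * enorm (y - x) ^+ 2)%:E)%E
                     | y in [set: vec]])%E.

Definition prox_bounded (g : vec -> \bar R) : Prop :=
  exists nu, prox_bounded_at g nu.

Definition prox_threshold (g : vec -> \bar R) : \bar R :=
  ereal_sup [set nu%:E | nu in prox_bounded_at g].

Definition frechet_subgrad (g : vec -> \bar R) (x v : vec) : Prop :=
  g x \is a fin_num /\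
  forall eps : R, 0 < eps -> \forall z \near x,
    (g x + (dotp v (z - x) - eps * enorm (z - x))%:E <= g z)%E.

Definition lim_subdiff (g : vec -> \bar R) (x : vec) : set vec :=
  [set v | g x \is a fin_num /\
     exists (xs vs : nat -> vec),
       xs @ \oo --> x /\ (fun k => g (xs k)) @ \oo --> g x /\
       (forall k, frechet_subgrad g (xs k) (vs k)) /\ vs @ \oo --> v].

Definition phi (f : vec -> R) (B : vec -> mat) (x s : vec) : R :=
  f x + dotp (grad f x) s + 2^-1 * dotp s (B x *m s).

Definition mR2N (f : vec -> R) (B : vec -> mat) (psi : vec -> vec -> \bar R)
  (sigma : R) (x s : vec) : \bar R :=
  ((phi f B x s + 2^-1 * sigma * enorm s ^+ 2)%:E + psi x s)%E.

Definition phi_cp (f : vec -> R) (x s : vec) : R := f x + dotp (grad f x) s.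

Definition m_cp (f : vec -> R) (psi : vec -> vec -> \bar R)
  (nuinv : R) (x s : vec) : \bar R :=
  ((phi_cp f x s + 2^-1 * nuinv * enorm s ^+ 2)%:E + psi x s)%E.

Definition P_cp (f : vec -> R) (psi : vec -> vec -> \bar R) (nuinv : R) (x : vec)
  : set vec := [set s | forall t, (m_cp f psi nuinv x s <= m_cp f psi nuinv x t)%E].

Definition xi_cp (f : vec -> R) (h : vec -> \bar R) (psi : vec -> vec -> \bar R)
  (x scp : vec) : \bar R :=
  ((f x)%:E + h x - ((phi_cp f x scp)%:E + psi x scp))%E.

(* division in the ratio rho_k, with the conventions
   (+-oo) * 0 = 0 and (+-oo)/(+-oo) = 0 (hence a/(+-oo) = 0) *)
Definition rdiv (a b : \bar R) : \bar R :=
  match b with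
  | r%:E => (a * (r^-1)%:E)%E
  | _ => 0%E
  end.

Definition rho (f : vec -> R) (h : vec -> \bar R) (B : vec -> mat)
  (psi : vec -> vec -> \bar R) (x s : vec) : \bar R :=
  rdiv ((f x)%:E + h x - ((f (x + s)%R)%:E + h (x + s)%R))%E
       ((phi f B x 0%R)%:E + psi x 0%R - ((phi f B x s)%:E + psi x s))%E.

Definition rk (Bs : nat -> mat) (k : nat) : R :=
  \big[Num.max/0]_(j < k.+1) snorm (Bs j) + 1.

(* Square root on extended reals (only applied to nonnegative values) *)
Definition esqrt (a : \bar R) : \bar R :=
  match a with
  | r%:E => (Num.sqrt r)%:E
  | +oo%E => +oo%E
  | -oo%E => 0%E
  end.

End Defs.

(* Main.v *)
Require Import Defs.
From HB Require Import structures.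
From mathcomp Require Import all_boot all_order all_algebra.
From mathcomp Require Import all_classical all_reals all_analysis.
Import Order.TTheory GRing.Theory Num.Theory.
Import numFieldNormedType.Exports.
Local Open Scope classical_set_scope.
Local Open Scope ring_scope.
From mathcomp Require Import ring lra finmap.
Set Warnings "-all".


Section L.
Context {R : realType} {n : nat}.
Implicit Types (u v y z g : 'cV[R]_n).

Lemma dotp_ge0 v : 0 <= dotp v v.
Proof. by apply: sumr_ge0 => i _; rewrite -expr2 sqr_ge0. Qed.

Lemma sq_le_dotp v i : v i 0 ^+ 2 <= dotp v v.
Proof.
rewrite /dotp (bigD1 i) //= -expr2 lerDl.
by apply: sumr_ge0 => j _; rewrite -expr2 sqr_ge0.
Qed.

Lemma enorm2 v : enorm v ^+ 2 = dotp v v.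
Proof. by rewrite /enorm sqr_sqrtr // dotp_ge0. Qed.

Lemma enorm_ge0 v : 0 <= enorm v.
Proof. exact: sqrtr_ge0. Qed.

Lemma abs_le_enorm v i : `|v i 0| <= enorm v.
Proof.
rewrite -(@ler_pXn2r _ 2) //= ?nnegrE ?enorm_ge0 //.
by rewrite enorm2 real_normK ?num_real // sq_le_dotp.
Qed.

Lemma mxnorm_le v : `|v| <= enorm v.
Proof.
have -> : `|v| = mx_norm v by [].
rewrite mx_normrE; apply: bigmax_le => [|[i j] _]; first exact: enorm_ge0.
by rewrite /= (ord1 j) abs_le_enorm.
Qed.

Lemma dotp0r v : dotp v 0 = 0.
Proof. by rewrite /dotp big1 // => i _; rewrite mxE mulr0. Qed.

Lemma enorm0 : enorm (0 : 'cV[R]_n) = 0.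
Proof. by rewrite /enorm dotp0r sqrtr0. Qed.

Lemma enorm_eq0 v : enorm v = 0 -> v = 0.
Proof.
move=> H; have : dotp v v = 0 by rewrite -enorm2 H expr0n.
move=> /eqP; rewrite psumr_eq0; last by move=> i _; rewrite -expr2 sqr_ge0.
move=> /allP H2; apply/matrixP => i j; rewrite (ord1 j) mxE.
have := H2 i (mem_index_enum i); rewrite implyTb -expr2 sqrf_eq0 => /eqP //.
Qed.

Lemma dotp_sub_le y z : dotp (y - z) (y - z) <= 2 * dotp y y + 2 * dotp z z.
Proof.
rewrite /dotp !mulr_sumr -big_split /=; apply: ler_sum => i _.
rewrite !mxE; set a := y i 0; set b := z i 0.
have := sqr_ge0 (a + b); rewrite -!expr2; nra.
Qed.

Lemma dotp_lin_le g y : - dotp g y <= dotp y y + dotp g g / 4.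
Proof.
rewrite /dotp -sumrN mulr_suml -big_split /=; apply: ler_sum => i _.
set a := y i 0; set b := g i 0.
have := sqr_ge0 (a + b / 2); rewrite -!expr2; nra.
Qed.

Definition Cm (M : 'M[R]_n) : R := \sum_i \sum_j `|M i j|.

Lemma Cm_ge0 M : 0 <= Cm M.
Proof. by apply: sumr_ge0 => i _; apply: sumr_ge0 => j _. Qed.

Lemma quad_le M s : `|dotp s (M *m s)| <= Cm M * dotp s s.
Proof.
rewrite /dotp /Cm mulr_suml; apply: le_trans (ler_norm_sum _ _ _) _.
apply: ler_sum => i _; rewrite mxE mulr_sumr mulr_suml.
apply: le_trans (ler_norm_sum _ _ _) _; apply: ler_sum => j _.
rewrite normrM normrM mulrCA ler_wpM2l //.
rewrite -[\sum_(i0 < n) _]/(dotp s s).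
have h1 := sq_le_dotp s i; have h2 := sq_le_dotp s j.
have := sqr_ge0 (`|s i 0| - `|s j 0|).
rewrite -[s i 0 ^+ 2]real_normK ?num_real // in h1.
rewrite -[s j 0 ^+ 2]real_normK ?num_real // in h2.
nra.
Qed.

End L.

Lemma grad_dotp (R : realType) n (f : 'cV[R]_n -> R) x s :
  dotp (grad f x) s = 'd f x s.
Proof.
rewrite {2}(matrix_sum_delta s) linear_sum /dotp.
apply: eq_bigr => i _; rewrite big_ord1 linearZ /= mxE mulrC (ord1 (0:'I_1)).
done.
Qed.

Lemma core (R : realType) (th1 th2 eta1 eps eps1 nu sig C h0 a pc qc f0 gs Qs Qc ps qs S fs hs : R) :
  0 < eps1 -> 0 < th1 -> th1 < 1 -> 1 < th2 -> 0 < eta1 -> eta1 < 1 -> 0 < eps -> 0 < nu ->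
  0 <= sig -> 0 <= C -> 0 <= qc -> 0 <= S -> S ^+ 2 = qs ->
  a + 2^-1 * nu^-1 * qc + pc <= h0 ->
  f0 + gs + 2^-1 * Qs + 2^-1 * sig * qs + ps <= f0 + a + 2^-1 * Qc + 2^-1 * sig * qc + pc ->
  Qc <= C * qc -> `|Qs| <= C * qs ->
  C + sig <= (1 + th1) / 2 * nu^-1 ->
  `|hs - ps| <= eps1 * S -> `|fs - f0 - gs| <= eps1 * S ->
  qs <= th2 ^+ 2 * qc ->
  eps ^+ 2 * nu < h0 - a - pc ->
  C * th2 ^+ 2 * nu <= (1 - eta1) * ((1 - th1) / 2) / 2 ->
  eps1 * (8 * th2) <= (1 - eta1) * ((1 - th1) / 2) * eps ->
  0 < f0 + h0 - (f0 + gs + 2^-1 * Qs) - ps /\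
  eta1 * (f0 + h0 - (f0 + gs + 2^-1 * Qs) - ps) <= f0 + h0 - fs - hs.
Proof.
move=> e1p t10 t11 t2 e10 e11 ep0 nu0 sg0 C0 qc0 S0 Sq H1 H2 HQc HQs H3 H4 H4' H5 H6 H7 H7'.
have [xi xiE] : exists xi, xi = h0 - a - pc by eexists.
rewrite -xiE in H6.
have [w wE] : exists w, w = nu^-1 by eexists.
rewrite -wE in H1 H3.
have w0 : 0 < w by rewrite wE invr_gt0.
have nw : nu * w = 1 by rewrite wE mulfV // gt_eqF.
have [k kE] : exists k, k = (1 - eta1) * ((1 - th1) / 2) by eexists.
rewrite -kE in H7 H7'.
have k0 : 0 < k by rewrite kE; apply: mulr_gt0; lra.
have xi0 : 0 < xi by apply: le_lt_trans H6; apply: mulr_ge0 (ltW nu0); exact: sqr_ge0.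
have s1 : w * qc <= 2 * xi.
  have : 2^-1 * w * qc = 2^-1 * (w * qc) by ring.
  lra.
have s1' : qc <= 2 * nu * xi.
  have := ler_wpM2l (ltW nu0) s1; rewrite mulrA nw mul1r; lra.
have qs0 : 0 <= qs by rewrite -Sq sqr_ge0.
have s2 : (C + sig) * qc <= (1 + th1) / 2 * (2 * xi).
  apply: le_trans (ler_wpM2r qc0 H3) _.
  rewrite (_ : _ * qc = (1 + th1) / 2 * (w * qc)); last by ring.
  apply: ler_wpM2l => //; lra.
have [D DE] : exists D, D = f0 + h0 - (f0 + gs + 2^-1 * Qs) - ps by eexists.
rewrite -DE.
have sD : (1 - th1) / 2 * xi <= D.
  have : 2^-1 * Qc <= 2^-1 * (C * qc) by lra.
  have : 0 <= 2^-1 * sig * qs by apply: mulr_ge0 => //; lra.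
  lra.
have D0 : 0 < D by apply: lt_le_trans sD; apply: mulr_gt0 => //; lra.
have s5 : C * qs / 2 <= k * xi / 2.
  have h1 : C * qs <= C * (th2 ^+ 2 * (2 * nu * xi)).
    apply: ler_wpM2l => //; apply: le_trans H5 _; apply: ler_wpM2l => //.
    by rewrite sqr_ge0.
  have h2 : C * th2 ^+ 2 * nu * xi <= k / 2 * xi by apply: ler_wpM2r; lra.
  have : C * (th2 ^+ 2 * (2 * nu * xi)) = 2 * (C * th2 ^+ 2 * nu * xi) by ring.
  lra.
have s6 : eps * S <= 2 * th2 * xi.
  have h1 : (eps * S) ^+ 2 <= (2 * th2 * xi) ^+ 2.
    rewrite exprMn Sq.
    have h2 : eps ^+ 2 * qs <= eps ^+ 2 * (th2 ^+ 2 * (2 * nu * xi)).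
      apply: ler_wpM2l; first by rewrite sqr_ge0.
      apply: le_trans H5 _; apply: ler_wpM2l => //; by rewrite sqr_ge0.
    have h3 : eps ^+ 2 * (th2 ^+ 2 * (2 * nu * xi)) = 2 * th2 ^+ 2 * xi * (eps ^+ 2 * nu) by ring.
    have h4 : 2 * th2 ^+ 2 * xi * (eps ^+ 2 * nu) <= 2 * th2 ^+ 2 * xi * xi.
      apply: ler_wpM2l; last exact: ltW.
      apply: mulr_ge0; last exact: ltW; apply: mulr_ge0 => //; exact: sqr_ge0.
    have h5 : 2 * th2 ^+ 2 * xi * xi <= (2 * th2 * xi) ^+ 2.
      have : (2 * th2 * xi) ^+ 2 = 4 * th2 ^+ 2 * xi * xi by ring.
      move=> ->; apply: ler_wpM2r; first exact: ltW.
      apply: ler_wpM2r; [exact: ltW | have := sqr_ge0 th2; lra].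
    lra.
  rewrite -(@ler_pXn2r _ 2) //= nnegrE; first exact: mulr_ge0 (ltW _) S0.
  apply: mulr_ge0 (ltW xi0); lra.
have s7 : 2 * eps1 * S <= k * xi / 2.
  rewrite -(ler_pM2l ep0).
  have h1 : 2 * eps1 * (eps * S) <= 2 * eps1 * (2 * th2 * xi).
    by apply: ler_wpM2l => //; apply: mulr_ge0 => //; exact: ltW.
  have h2 : (eps1 * (8 * th2)) * xi <= (k * eps) * xi by apply: ler_wpM2r => //; exact: ltW.
  lra.
have s8 : k * xi <= (1 - eta1) * D.
  rewrite kE -mulrA; apply: ler_wpM2l; lra.
have := ler_norm (- Qs); rewrite normrN.
have := ler_norm (hs - ps).
have := ler_norm (fs - f0 - gs).
split => //; lra.
Qed.

Lemma liminf0 (R : realType) (u : nat -> \bar R) :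
  (forall k, (0 <= u k)%E) ->
  (forall e : R, 0 < e -> forall N, exists2 k, (N <= k)%N & (u k <= e%:E)%E) ->
  limn_einf u = 0%E.
Proof.
move=> u0 Hu; rewrite limn_einf_lim (cvg_lim _ (@cvg_einfs_sup _ u)) //.
apply/eqP; rewrite eq_le; apply/andP; split.
  apply: ge_ereal_sup => _ [N _ <-] /=.
  apply/lee_addgt0Pr => e e0; rewrite add0e.
  have [k Nk uk] := Hu e e0 N.
  by apply: le_trans uk; apply: ereal_inf_lbound; exists k.
apply: le_trans (ereal_sup_ubound _); last by exists 0%N.
by apply: le_ereal_inf_tmp => _ [k _ <-]; exact: u0.
Qed.

Lemma prox_core (R : realType) (nu w mi a pc qc h0 c0 qz qg : R) :
  0 < nu -> w = nu^-1 -> 0 <= mi -> 0 <= qc ->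
  a + 2^-1 * w * qc + pc <= h0 -> c0 - (qc + qz) * mi <= pc ->
  - a <= qc + qg / 4 -> 4 * (1 + mi) <= w ->
  qc <= 4 * nu * (h0 + qg / 4 - c0 + qz * mi).
Proof.
move=> nu0 wE mi0 qc0 H1 H2 H3 H4.
have nw : nu * w = 1 by rewrite wE mulfV // gt_eqF.
have h5 : 4 * (1 + mi) * qc <= w * qc by apply: ler_wpM2r.
have h6 : w * qc <= 4 * (h0 + qg / 4 - c0 + qz * mi).
  have : (qc + qz) * mi = qc * mi + qz * mi by ring.
  have : 4 * (1 + mi) * qc = 4 * qc + 4 * (qc * mi) by ring.
  have : 2^-1 * w * qc = 2^-1 * (w * qc) by ring.
  lra.
have := ler_wpM2l (ltW nu0) h6; rewrite mulrA nw mul1r; lra.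
Qed.

Lemma taylor (R : realType) n (f : 'cV[R]_n -> R) (x : 'cV[R]_n) :
  differentiable f x -> forall e : R, 0 < e -> exists2 d : R, 0 < d &
  forall s : 'cV[R]_n, `|s| < d -> `|f (x + s) - f x - 'd f x s| <= e * `|s|.
Proof.
move=> /diff_locally H e e0.
have := eqadd_some_oP H e0 => /nbhs_norm0P [d d0 Hd].
exists d => // s sd; have := Hd s sd; rewrite /= addrC.
by rewrite !fctE /= opprD addrC (addrC s) addrA.
Qed.

Lemma fin_of_le (R : realType) (r t : R) (p : \bar R) :
  p != -oo%E -> (r%:E + p <= t%:E)%E -> p \is a fin_num.
Proof. by case: p. Qed.

Lemma dotp0l (R : realType) n (v : 'cV[R]_n) : dotp 0 v = 0.
Proof. by rewrite /dotp big1 // => i _; rewrite mxE mul0r. Qed.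
Lemma contra_ratio (R : realType) (eta N N' D D' : R) :
  N' = N -> D' = D -> 0 < D -> eta * D <= N -> N' / D' < eta -> False.
Proof.
move=> -> -> D0 H; rewrite ltr_pdivrMr // ltNge H //.
Qed.

Theorem theorem5p6 (R : realType) (n : nat)
  (f : 'cV[R]_n -> R) (h : 'cV[R]_n -> \bar R) (B : 'cV[R]_n -> 'M[R]_n)
  (psi : 'cV[R]_n -> 'cV[R]_n -> \bar R) (omega : R -> R)
  (theta1 theta2 eta1 eta2 gamma1 gamma2 gamma3 : R)
  (x : nat -> 'cV[R]_n) (sigma : nat -> R) (scp st s : nat -> 'cV[R]_n) :
  (* standing assumptions *)
  cont_diff f -> eproper h -> elsc h ->
  (forall y, (B y)^T = B y) ->
  (* (MA1) *)
  (forall y, eproper (psi y) /\ elsc (psi y) /\ prox_bounded (psi y) /\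
             psi y 0 = h y /\ lim_subdiff (psi y) 0 = lim_subdiff h y) ->
  (* (MA2) *)
  (exists lam : \bar R, (0 < lam)%E /\ forall y, (lam <= prox_threshold (psi y))%E) ->
  (* (MA3) *)
  (forall t, 0 <= t -> 0 <= omega t) ->
  (fun t => omega t / t) @ 0^'+ --> 0 ->
  (forall k, (h (x k + s k)%R <= psi (x k) (s k) + (omega (enorm (s k)))%:E)%E /\
             (psi (x k) (s k) <= h (x k + s k)%R + (omega (enorm (s k)))%:E)%E) ->
  (* (MA4) *)
  (\sum_(k <oo) ((rk (fun j => B (x j)) k)^-1)%:E = +oo)%E ->
  (* Algorithm R2N: constants and initialization *)
  0 < theta1 -> theta1 < 1 -> 1 < theta2 ->
  0 < eta1 -> eta1 <= eta2 -> eta2 < 1 ->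
  0 < gamma3 -> gamma3 <= 1 -> 1 < gamma1 -> gamma1 <= gamma2 ->
  (h (x 0%N) < +oo)%E -> 0 < sigma 0 ->
  let nu k := theta1 / (snorm (B (x k)) + sigma k) in
  let rho_k k := rho f h B psi (x k) (s k) in
  (* Cauchy point *)
  (forall k, P_cp f psi (nu k)^-1 (x k) (scp k)) ->
  (* trial step st k with model decrease, then safeguard reset *)
  (forall k, (mR2N f B psi (sigma k) (x k) (st k)
              <= mR2N f B psi (sigma k) (x k) (scp k))%E) ->
  (forall k, s k = if theta2 * enorm (scp k) < enorm (st k) then scp k else st k) ->
  (* iterate update *)
  (forall k, x k.+1 = if (eta1%:E <= rho_k k)%E then x k + s k else x k) ->
  (* regularization update *)
  (forall k,
     ((eta2%:E <= rho_k k)%E -> gamma3 * sigma k <= sigma k.+1 <= sigma k) /\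
     ((eta1%:E <= rho_k k)%E -> (rho_k k < eta2%:E)%E ->
        sigma k <= sigma k.+1 <= gamma1 * sigma k) /\
     ((rho_k k < eta1%:E)%E -> gamma1 * sigma k <= sigma k.+1 <= gamma2 * sigma k)) ->
  (* only finitely many successful iterations *)
  finite_set [set k | (eta1%:E <= rho_k k)%E] ->
  (exists xs : 'cV[R]_n, \forall k \near \oo, x k = xs) /\
  limn_einf (fun k => ((Num.sqrt (nu k)^-1)%:E
                       * esqrt (xi_cp f h psi (x k) (scp k)))%E) = 0%E.
Proof.
move=> Cf hprop hlsc Bsym MA1 MA2 om0 omlim MA3 MA4 th10 th11 th2 e10 e12 e21
  g30 g31 g11 g12 hx0 sig0 nu rho_k Pcp mdec sdef xdef sigdef fin.
have [K HK] : exists K, forall k, (eta1%:E <= rho_k k)%E -> (k < K)%N.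
  move/finite_fsetP: fin => [F FE].
  exists (\max_(i <- finmap.enum_fset F) i).+1 => k Hk; rewrite ltnS.
  have kF : [set` F] k by rewrite -FE.
  exact: (leq_bigmax_seq k kF).
have unsucc : forall k, (K <= k)%N -> (rho_k k < eta1%:E)%E.
  move=> k Kk; rewrite ltNge; apply/negP => /HK; rewrite ltnNge Kk //.
have xK : forall k, (K <= k)%N -> x k = x K.
  move=> k; elim: k => [|k IH]; first by rewrite leqn0 => /eqP ->.
  rewrite leq_eqVlt => /orP [/eqP -> //|]; rewrite ltnS => Kk.
  by rewrite xdef ifF ?IH //; apply/negbTE; rewrite -ltNge unsucc.
have sigpos : forall k, 0 < sigma k.
  elim => [//|k IH]; have [H1 [H2 H3]] := sigdef k.
  case: (leP eta2%:E (rho_k k)) => [h2|h2].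
    by have /andP[+ _] := H1 h2; apply: lt_le_trans; rewrite mulr_gt0.
  case: (leP eta1%:E (rho_k k)) => [h1|h1].
    by have /andP[+ _] := H2 h1 h2; apply: lt_le_trans.
  have /andP[+ _] := H3 h1; apply: lt_le_trans; rewrite mulr_gt0 //; lra.
have sigup : forall k, (K <= k)%N -> gamma1 * sigma k <= sigma k.+1.
  by move=> k Kk; have [_ [_ H3]] := sigdef k; have /andP[] := H3 (unsucc k Kk).
have siggrow : forall k0, (K <= k0)%N -> forall j,
    sigma k0 + j%:R * ((gamma1 - 1) * sigma k0) <= sigma (k0 + j)%N.
  move=> k0 Kk0; elim => [|j IH]; first by rewrite mul0r addr0 addn0.
  have := sigup (k0 + j)%N (leq_trans Kk0 (leq_addr _ _)).
  rewrite addnS; have := sigpos k0; have : 0 <= j%:R :> R by [].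
  have : (j.+1%:R : R) = j%:R + 1 by rewrite -natr1.
  move=> ->; move: IH; set a := sigma (k0 + j)%N; set b := sigma (k0 + j).+1.
  have : 0 <= (gamma1 - 1) * sigma k0 by apply: mulr_ge0; [lra | exact: ltW].
  move: (j%:R : R) => J; move=> h0 IH JJ s0 Hb.
  have : gamma1 * a = a + (gamma1 - 1) * a by ring.
  have : (gamma1 - 1) * sigma k0 <= (gamma1 - 1) * a.
    by apply: ler_wpM2l; [lra | have := mulr_ge0 JJ h0; lra].
  move=> H5 H6; rewrite mulrDl mul1r; lra.
split.
  by exists (x K); exists K => // k /= Kk; exact: xK.
have hfin : forall k, h (x k) \is a fin_num.
  elim => [|k IH].
    rewrite fin_numE; apply/andP; split; first exact: hprop.1.
    by rewrite lt_eqF.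
  rewrite xdef; case: ifP => // succ.
  rewrite fin_numE; apply/andP; split; first exact: hprop.1.
  apply/negP => /eqP hinf.
  have [Hl _] := MA3 k; rewrite hinf leye_eq in Hl.
  have psinf : psi (x k) (s k) = +oo%E.
    by move: Hl; case: (psi (x k) (s k)).
  move: succ; rewrite /rho_k /rho (MA1 (x k)).2.2.2.1 psinf.
  by rewrite -(fineK IH) /= lee_fin leNgt e10.
apply: liminf0.
  move=> k; apply: mule_ge0; first by rewrite lee_fin sqrtr_ge0.
  by case: (xi_cp f h psi (x k) (scp k)) => //= r; rewrite lee_fin sqrtr_ge0.
move=> eps eps0 N0.
case: (pselect (exists2 k, (N0 <= k)%N & ((Num.sqrt (nu k)^-1)%:E
    * esqrt (xi_cp f h psi (x k) (scp k)) <= eps%:E)%E)) => // Hn.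
exfalso.
have big : forall k, (N0 <= k)%N -> (eps%:E < (Num.sqrt (nu k)^-1)%:E
    * esqrt (xi_cp f h psi (x k) (scp k)))%E.
  by move=> k Nk; rewrite ltNge; apply/negP => H; apply: Hn; exists k.
pose xs := x K.
pose g := grad f xs.
pose c := snorm (B xs).
pose C := Cm (B xs).
have C0 : 0 <= C := Cm_ge0 _.
pose h0 := fine (h xs).
have h0E : h xs = h0%:E by rewrite fineK // hfin.
have [mu [z [c0 [mu0 Hc0]]]] : exists mu z c0, 0 < mu /\ forall y,
    (c0%:E <= psi xs y + ((2 * mu)^-1 * enorm (y - z) ^+ 2)%:E)%E.
  have [_ [_ [[mu [mu0 [z Hz]]] _]]] := MA1 xs.
  move: Hz; set I := ereal_inf _ => HI.
  exists mu, z, (fine I); split => // y.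
  apply: (@le_trans _ _ I).
    by case: I HI => //= r; rewrite leey.
  by apply: ereal_inf_lbound; exists y.
pose kap := (1 - eta1) * ((1 - theta1) / 2).
have kap0 : 0 < kap by apply: mulr_gt0; lra.
pose eps1 := kap * eps / (8 * theta2).
have eps10 : 0 < eps1 by rewrite /eps1 divr_gt0 ?mulr_gt0 //; lra.
have [dT dT0 HT] := @taylor R n f xs (Cf.1 xs) eps1 eps10.
have [dW dW0 HW] : exists2 dW : R, 0 < dW & forall t, 0 < t -> t < dW -> omega t <= eps1 * t.
  have := cvgr_dist_lt _ _ omlim _ eps10.
  move=> /(_ (at_right_proper_filter _)).
  rewrite near_withinE => /nbhs_norm0P [d d0 Hd].
  exists d => // t t0 td.
  have := Hd t; rewrite /= sub0r normrN gtr0_norm // => /(_ td t0).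
  move=> /(le_lt_trans (ler_norm _)); rewrite ltr_pdivrMr // mulrC; exact: ltW.
pose delta := Num.min dT dW.
have delta0 : 0 < delta by rewrite lt_min dT0 dW0.
have dW' : delta <= dW by rewrite /delta ge_min lexx orbT.
have dT' : delta <= dT by rewrite /delta ge_min lexx.
pose mi := mu^-1.
have mi0 : 0 <= mi by rewrite invr_ge0 ltW.
pose A := h0 + dotp g g / 4 - c0 + dotp z z * mi.
pose nu0 := Num.min (Num.min (kap / 2 / (C * theta2 ^+ 2 + 1)) (1 / (4 * (1 + mi))))
   (delta ^+ 2 / (4 * theta2 ^+ 2 * (`|A| + 1))).
have th2sq : 0 < theta2 ^+ 2 by rewrite exprn_gt0 //; lra.
have nu00 : 0 < nu0.
  have t20 : 0 < theta2 by lra.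
  have p1 : 0 < C * theta2 ^+ 2 + 1 by have := mulr_ge0 C0 (ltW th2sq); lra.
  have p2 : 0 < 4 * (1 + mi) by lra.
  have p3 : 0 < 4 * theta2 ^+ 2 * (`|A| + 1).
    by apply: mulr_gt0; [apply: mulr_gt0 => //; lra | have := normr_ge0 A; lra].
  by rewrite !lt_min !divr_gt0 // ?exprn_gt0 //; lra.
have nu0a : nu0 <= kap / 2 / (C * theta2 ^+ 2 + 1) by rewrite /nu0 !ge_min lexx.
have nu0b : nu0 <= 1 / (4 * (1 + mi)) by rewrite /nu0 !ge_min lexx orbT.
have nu0c : nu0 <= delta ^+ 2 / (4 * theta2 ^+ 2 * (`|A| + 1)) by rewrite /nu0 ge_min lexx orbT.
pose thp := (1 + theta1) / 2.
pose M := Num.max (theta1 / nu0 - c) (2 * (theta1 * C - thp * c) / (1 - theta1)).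
pose k0 := maxn N0 K.
have Kk0 : (K <= k0)%N by rewrite leq_max leqnn orbT.
have s0pos := sigpos k0.
have g1s : 0 < (gamma1 - 1) * sigma k0 by apply: mulr_gt0 => //; lra.
pose j := Num.Def.archi_bound (`|M| / ((gamma1 - 1) * sigma k0)).
pose k := (k0 + j)%N.
have sigk : M <= sigma k.
  have := siggrow k0 Kk0 j.
  have : `|M| / ((gamma1 - 1) * sigma k0) < j%:R.
    by apply: archi_boundP; rewrite divr_ge0 // ltW.
  rewrite ltr_pdivrMr // => H1 H2.
  have := ler_norm M; lra.
have Kk : (K <= k)%N by rewrite (leq_trans Kk0) ?leq_addr.
have Nk : (N0 <= k)%N by rewrite (leq_trans _ (leq_addr _ _)) // leq_max leqnn.
have xk : x k = xs := xK k Kk.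
have sigk1 : theta1 / nu0 - c <= sigma k by apply: le_trans sigk; rewrite /M le_max lexx.
have sigk2 : 2 * (theta1 * C - thp * c) / (1 - theta1) <= sigma k.
  by apply: le_trans sigk; rewrite /M le_max lexx orbT.
have cpos : theta1 / nu0 <= c + sigma k by lra.
have cpos' : 0 < c + sigma k by apply: lt_le_trans cpos; rewrite divr_gt0.
have nuE : nu k = theta1 / (c + sigma k) by rewrite /nu xk.
have nupos : 0 < nu k by rewrite nuE divr_gt0.
have nule : nu k <= nu0.
  by rewrite nuE ler_pdivrMr // mulrC -ler_pdivrMr.
have nuinv : (nu k)^-1 = (c + sigma k) / theta1 by rewrite nuE invf_div.
have H3 : C + sigma k <= thp * (nu k)^-1.
  rewrite nuinv /thp.
  have : 2 * (theta1 * C - (1 + theta1) / 2 * c) <= sigma k * (1 - theta1).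
    by rewrite -ler_pdivrMr //; lra.
  move=> H; rewrite mulrA ler_pdivlMr //.
  lra.
have Hcp := Pcp k 0.
rewrite xk /m_cp /phi_cp dotp0r enorm0 (MA1 xs).2.2.2.1 h0E in Hcp.
have pcfin : psi xs (scp k) \is a fin_num.
  by apply: (@fin_of_le R _ _ _ _ Hcp); exact: (MA1 xs).1.1.
pose pc := fine (psi xs (scp k)).
rewrite -(fineK pcfin) -/pc -!EFinD lee_fin expr0n /= !mulr0 !addr0 in Hcp.
have [msk Ssk] : (mR2N f B psi (sigma k) (x k) (s k) <= mR2N f B psi (sigma k) (x k) (scp k))%E
    /\ enorm (s k) <= theta2 * enorm (scp k).
  rewrite (sdef k); case: ifPn => H; split.
  - exact: le_refl.
  - by rewrite ler_peMl ?enorm_ge0 //; lra.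
  - exact: mdec.
  - by rewrite leNgt.
rewrite xk /mR2N -(fineK pcfin) -/pc -EFinD in msk.
have psfin : psi xs (s k) \is a fin_num.
  by apply: (@fin_of_le R _ _ _ _ msk); exact: (MA1 xs).1.1.
pose ps := fine (psi xs (s k)).
rewrite -(fineK psfin) -/ps -EFinD lee_fin /phi in msk.
have [HA HB] := MA3 k.
rewrite xk -(fineK psfin) -/ps in HA HB.
have hsfin : h (xs + s k) \is a fin_num.
  rewrite fin_numE hprop.1 /=; apply/negP => /eqP E.
  by move: HA; rewrite E -EFinD leye_eq.
pose hs := fine (h (xs + s k)).
rewrite -(fineK hsfin) -/hs -!EFinD !lee_fin in HA HB.
pose S := enorm (s k).
pose qs := S ^+ 2.
pose qc := enorm (scp k) ^+ 2.
have S0 : 0 <= S := enorm_ge0 _.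
have qc0 : 0 <= qc := sqr_ge0 _.
have t20 : 0 < theta2 by lra.
have H5 : qs <= theta2 ^+ 2 * qc.
  rewrite /qs /qc -exprMn ler_pXn2r ?nnegrE //.
  by apply: mulr_ge0; [exact: ltW | exact: enorm_ge0].
have HQs : `|dotp (s k) (B xs *m s k)| <= C * qs.
  by rewrite /qs /S enorm2; exact: quad_le.
have HQc : dotp (scp k) (B xs *m scp k) <= C * qc.
  by rewrite /qc enorm2; apply: le_trans (quad_le _ _); exact: ler_norm.
have Hpx : c0 - (qc + dotp z z) * mi <= pc.
  rewrite -(enorm2 z).
  have := Hc0 (scp k); rewrite -(fineK pcfin) -/pc -EFinD lee_fin.
  have := dotp_sub_le (scp k) z; rewrite -!enorm2 -/qc => H1 H2.
  have : (2 * mu)^-1 * enorm (scp k - z) ^+ 2 <= (2 * mu)^-1 * (2 * qc + 2 * enorm z ^+ 2).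
    by apply: ler_wpM2l => //; rewrite invr_ge0 mulr_ge0 // ltW.
  have -> : (2 * mu)^-1 * (2 * qc + 2 * enorm z ^+ 2) = (qc + enorm z ^+ 2) * mi.
    by rewrite /mi invfM; field; rewrite lt0r_neq0.
  lra.
have Hlin : - dotp g (scp k) <= qc + dotp g g / 4.
  by rewrite /qc enorm2; exact: dotp_lin_le.
have Hw : 4 * (1 + mi) <= (nu k)^-1.
  have h1 : nu k <= 1 / (4 * (1 + mi)) := le_trans nule nu0b.
  rewrite -[X in X <= _]invrK lef_pV2 ?posrE ?invr_gt0 //; last by lra.
  by rewrite -div1r.
have Hqc : qc <= 4 * nu k * A.
  apply: (@prox_core R _ _ _ _ _ _ _ _ _ _ nupos erefl mi0 qc0 _ Hpx Hlin Hw).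
  rewrite /g /h0 /qc in Hcp *; lra.
have Sd : S < delta.
  have hA : 4 * nu k * A <= 4 * nu k * `|A| by apply: ler_wpM2l; [lra | exact: ler_norm].
  have hB : theta2 ^+ 2 * (4 * nu k * `|A|) <= theta2 ^+ 2 * (4 * `|A|) * nu0.
    have : theta2 ^+ 2 * (4 * nu k * `|A|) = theta2 ^+ 2 * (4 * `|A|) * nu k by ring.
    move=> ->; apply: ler_wpM2l => //; apply: mulr_ge0; [exact: ltW|].
    apply: mulr_ge0 => //; lra.
  have hC : theta2 ^+ 2 * (4 * `|A|) * nu0 < delta ^+ 2.
    have p3 : 0 < 4 * theta2 ^+ 2 * (`|A| + 1).
      by apply: mulr_gt0; [apply: mulr_gt0 => //; lra | have := normr_ge0 A; lra].
    move: nu0c; rewrite ler_pdivlMr // => hh.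
    have : theta2 ^+ 2 * (4 * `|A|) * nu0 = nu0 * (4 * theta2 ^+ 2 * (`|A| + 1)) - 4 * theta2 ^+ 2 * nu0 by ring.
    have : 0 < 4 * theta2 ^+ 2 * nu0 by apply: mulr_gt0 => //; apply: mulr_gt0 => //; lra.
    lra.
  have : qs < delta ^+ 2.
    have : theta2 ^+ 2 * qc <= theta2 ^+ 2 * (4 * nu k * A) by apply: ler_wpM2l => //; exact: ltW.
    have : theta2 ^+ 2 * (4 * nu k * A) <= theta2 ^+ 2 * (4 * nu k * `|A|) by apply: ler_wpM2l => //; exact: ltW.
    lra.
  by rewrite /qs ltr_pXn2r // nnegrE ltW.
have HhW : `|hs - ps| <= eps1 * S.
  have [S00|Spos] := eqVneq S 0.
    have s0 : s k = 0 by apply: enorm_eq0.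
    have -> : hs = ps by rewrite /hs /ps s0 addr0 (MA1 xs).2.2.2.1.
    by rewrite subrr normr0 S00 mulr0.
  have Sp : 0 < S by rewrite lt0r Spos.
  have := HW S Sp (lt_le_trans Sd dW') ; rewrite -/S in HA HB => hw.
  rewrite ler_norml; apply/andP; split; lra.
have HfT : `|f (xs + s k) - f xs - dotp g (s k)| <= eps1 * S.
  rewrite /g grad_dotp; apply: le_trans (HT (s k) _) _.
    by apply: le_lt_trans (mxnorm_le _) (lt_le_trans Sd dT').
  by apply: ler_wpM2l; [exact: ltW | exact: mxnorm_le].
have xi0 : 0 <= h0 - dotp g (scp k) - pc.
  have : 0 <= 2^-1 / nu k * qc.
    by apply: mulr_ge0 => //; rewrite divr_ge0 // ltW.
  rewrite /g /h0 /qc in Hcp *; lra.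
have H6 : eps ^+ 2 * nu k < h0 - dotp g (scp k) - pc.
  have := big k Nk.
  rewrite xk /xi_cp h0E -(fineK pcfin) -/pc /phi_cp -!EFinD /= -EFinM lte_fin.
  rewrite -sqrtrM ?invr_ge0 ?ltW // => hb.
  have hb2 : eps ^+ 2 < (nu k)^-1 * (f xs + h0 - (f xs + dotp (grad f xs) (scp k) + pc)).
    rewrite -[X in _ < X]sqr_sqrtr; last by apply: mulr_ge0; [rewrite invr_ge0 ltW | rewrite /g in xi0; lra].
    by rewrite ltr_pXn2r ?nnegrE ?sqrtr_ge0 // ltW.
  rewrite -ltr_pdivlMr // mulrC; move: hb2; rewrite /g; lra.
have e11 : eta1 < 1 by lra.
have H7 : C * theta2 ^+ 2 * nu k <= (1 - eta1) * ((1 - theta1) / 2) / 2.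
  have h1 : nu k <= kap / 2 / (C * theta2 ^+ 2 + 1) := le_trans nule nu0a.
  have p1 : 0 < C * theta2 ^+ 2 + 1 by have := mulr_ge0 C0 (ltW th2sq); lra.
  move: h1; rewrite ler_pdivlMr // -/kap => h1.
  have : 0 <= nu k by exact: ltW.
  have : C * theta2 ^+ 2 * nu k + nu k = nu k * (C * theta2 ^+ 2 + 1) by ring.
  lra.
have H7' : eps1 * (8 * theta2) <= (1 - eta1) * ((1 - theta1) / 2) * eps.
  by rewrite /eps1 -/kap mulfVK // mulf_neq0 // gt_eqF //; lra.
have [D0 ND] := @core R theta1 theta2 eta1 eps eps1 (nu k) (sigma k) C h0
  (dotp g (scp k)) pc qc (f xs) (dotp g (s k)) (dotp (s k) (B xs *m s k))
  (dotp (scp k) (B xs *m scp k)) ps qs S (f (xs + s k)) hs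
  eps10 th10 th11 th2 e10 e11 eps0 nupos (ltW (sigpos k)) C0 qc0 S0 erefl
  ltac:(rewrite /g /h0 /qc in Hcp *; lra) msk HQc HQs H3 HhW HfT H5 H6 H7 H7'.
have := unsucc k Kk.
rewrite /rho_k /rho xk /phi dotp0r dotp0l (MA1 xs).2.2.2.1 h0E.
rewrite -(fineK psfin) -(fineK hsfin) -/ps -/hs.
rewrite -?EFinD -?EFinB -?EFinD -?EFinB /= -EFinM lte_fin => H.
apply: (@contra_ratio R _ _ _ _ _ _ _ D0 ND H); rewrite /g; ring.
Qed.
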